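(* Consider the network model and the NSB algorithm described in the context, in the setting without packet arrivals (no exogenous arrivals after time 0). For every graph $G$ and every finite collection of initial packets, the evacuation time of NSB (under any tie-breaking rule) is at most $\frac{3}{2}$ times the minimum evacuation time. That is, NSB has an approximation ratio no greater than $3/2$ for the evacuation time.
   Context: Network model. $G=(V,E)$ is a finite undirected graph with $n=|V|$ nodes and $m=|E|$ links; $L(i)$ denotes the set of links incident to node $i$. Time is slotted, $k=0,1,2,\dots$. Each link $l$ has a queue; $Q_l(k)$ is the number of packets waiting at link $l$ in time-slot $k$ (including packets arriving in slot $k$), and the workload (queue length) of node $i$ is $Q_i(k)=\sum_{l\in L(i)}Q_l(k)$. A schedule in a slot is a matching of $G$ (a set of links no two of which share an endpoint; one-hop interference model); only links with $Q_l(k)>0$ may be scheduled; each scheduled link transmits exactly one packet, which then leaves the system (single-hop traffic, unit link capacities). NSB algorithm. Time-slots are grouped into frames: frame $k'$ consists of slots $3k',3k'+1,3k'+2$. Let $R_i(k)=1$ if node $i$ is an endpoint of a link scheduled in slot $k$ and $R_i(k)=0$ otherwise (with $R_i(k)=0$ for $k<0$). Define $U_i(k)=R_i(k-1)R_i(k-2)$ if $k=3k'+2$ for some integer $k'$, and $U_i(k)=R_i(k-1)$ otherwise. Let $\Delta(k)=\max_{i\in V}Q_i(k)$. Node $i$ is heavy in slot $k$ if $Q_i(k)\ge \frac{n-1}{n}\Delta(k)$. In each slot $k$, NSB assigns node weights $w_i(k)=Q_i(k)(2-U_i(k))$ if $i$ is heavy and $w_i(k)=Q_i(k)$ otherwise;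 it excludes links with $Q_l(k)=0$, and chooses, among matchings $M$ of the remaining links, one maximizing $w(M)=\sum_{i:\,M\cap L(i)\neq\emptyset}w_i(k)$ (a maximum vertex-weighted matching, ties broken arbitrarily); one packet is transmitted on each link of the chosen matching. Evacuation time. Given finitely many initial packets and no further arrivals, the evacuation time of a scheduling algorithm is the number of time-slots it needs to transmit all the initial packets; the minimum evacuation time $\mathcal{X}'$ is the minimum of this over all feasible scheduling algorithms. An algorithm has approximation ratio $\eta$ if its evacuation time is at most $\eta\,\mathcal{X}'$ for every network graph and every finite set of initial packets. *)

(* Defs.v *)
From mathcomp Require Import all_boot all_order.
Set Implicit Arguments. Unset Strict Implicit. Unset Printing Implicit Defensive.

(* A network: node set V (a finType), link set E : {set {set V}} whose elements
   are 2-element subsets of V (simple undirected graph). *)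

Section Net.
Variables (V : finType) (E : {set {set V}}) (Q0 : {set V} -> nat).

Fixpoint qlen (S : nat -> {set {set V}}) (k : nat) (l : {set V}) : nat :=
  match k with
  | 0 => Q0 l
  | k'.+1 => qlen S k' l - (l \in S k')
  end.

Definition qnode S k (i : V) : nat := \sum_(l in E | i \in l) qlen S k l.

(* One-hop interference: a matching of G. *)
Definition matching (M : {set {set V}}) : Prop :=
  M \subset E /\
  forall l1 l2, l1 \in M -> l2 \in M -> l1 != l2 -> [disjoint l1 & l2].

Definition admissible S k (M : {set {set V}}) : Prop :=
  matching M /\ forall l, l \in M -> 0 < qlen S k l.

Definition feasible S : Prop := forall k, admissible S k (S k).

Definition Rn (S : nat -> {set {set V}}) (k : nat) (i : V) : nat := [exists l in S k, i \in (l : {set V})].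
(* R_i(k - d), with R_i(k) = 0 for k < 0 *)
Definition Rback S k d (i : V) : nat := if d <= k then Rn S (k - d) i else 0.
Definition Un S k (i : V) : nat :=
  if k %% 3 == 2 then Rback S k 1 i * Rback S k 2 i else Rback S k 1 i.

Definition Delta S k : nat := \max_(i : V) qnode S k i.

Definition heavy S k (i : V) : bool :=
  (#|V| - 1) * Delta S k <= #|V| * qnode S k i.

Definition weight S k (i : V) : nat :=
  if heavy S k i then qnode S k i * (2 - Un S k i) else qnode S k i.

Definition covered (M : {set {set V}}) (i : V) : bool := [exists l in M, i \in (l : {set V})].

Definition mweight S k (M : {set {set V}}) : nat :=
  \sum_(i | covered M i) weight S k i.

Definition NSB_run S : Prop :=
  forall k, admissible S k (S k) /\
            forall M, admissible S k M -> mweight S k M <= mweight S k (S k).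

(* All packets transmitted before slot k (i.e. within slots 0..k-1). *)
Definition evacuated S k : Prop := forall l, l \in E -> qlen S k l = 0.

End Net.

(* Main.v *)
Require Import Defs.
From mathcomp Require Import all_boot all_order zify.
From Stdlib Require Import ClassicalDescription.
Set Implicit Arguments. Unset Strict Implicit. Unset Printing Implicit Defensive.


Definition asb (P : Prop) : bool := if excluded_middle_informative P then true else false.
Lemma asbP (P : Prop) : reflect P (asb P).
Proof. rewrite /asb; case: excluded_middle_informative => h; by constructor. Qed.

Section Gen.
Variable V : finType.
Implicit Types A B : {set {set V}}.

Lemma disjP (A B : {set V}) : reflect (forall x, x \in A -> x \in B -> False) [disjoint A & B].
Proof.
rewrite disjoints_subset; apply: (iffP subsetP) => h x.
  by move=> /h; rewrite inE => /negP.
by move=> xA; rewrite inE; apply/negP; exact: h.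
Qed.

Definition cov A : {set V} := [set x | covered A x].
Definition pdisj A := forall l1 l2, l1 \in A -> l2 \in A -> l1 != l2 -> [disjoint l1 & l2].

Lemma covP A x : reflect (exists2 l, l \in A & x \in l) (x \in cov A).
Proof.
rewrite inE /covered; apply: (iffP existsP) => [[l /andP[h1 h2]]|[l h1 h2]]; first by exists l.
by exists l; rewrite h1 h2.
Qed.

Lemma cov_sub A l x : l \in A -> x \in l -> x \in cov A.
Proof. by move=> h1 h2; apply/covP; exists l. Qed.

Lemma covU A B : cov (A :|: B) = cov A :|: cov B.
Proof.
apply/setP => x; rewrite [in RHS]inE; apply/covP/orP.
  by case=> l; rewrite inE => /orP[] h1 h2; [left|right]; apply: cov_sub h2.
by case=> /covP[l h1 h2]; exists l => //; rewrite inE h1 ?orbT.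
Qed.

Lemma cov1 (a b : V) : cov [set [set a; b]] = [set a; b].
Proof.
apply/setP => x; apply/covP/idP; first by case=> l; rewrite inE => /eqP ->.
by move=> h; exists [set a; b] => //; rewrite set11.
Qed.

Lemma cov0 : cov set0 = set0.
Proof. by apply/setP => x; rewrite [RHS]inE; apply/negbTE/covP => -[l]; rewrite inE. Qed.

Lemma cov_subset A B : A \subset B -> cov A \subset cov B.
Proof. move=> h; apply/subsetP => x /covP[l h1 h2]; apply: cov_sub h2; exact: (subsetP h). Qed.

Lemma pdisj_sub A B : A \subset B -> pdisj B -> pdisj A.
Proof. move=> h hB l1 l2 h1 h2; apply: hB; exact: (subsetP h). Qed.

Lemma pdisjU A B : pdisj A -> pdisj B -> [disjoint cov A & cov B] -> pdisj (A :|: B).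
Proof.
move=> hA hB hd l1 l2; rewrite !inE => /orP[] h1 /orP[] h2 hne.
- exact: hA.
- apply/disjP => x x1 x2; move/disjP: hd; apply; [exact: cov_sub h1 x1| exact: cov_sub h2 x2].
- apply/disjP => x x1 x2; move/disjP: hd; apply; [exact: cov_sub h2 x2| exact: cov_sub h1 x1].
- exact: hB.
Qed.

Lemma pdisj1 (l : {set V}) : pdisj [set l].
Proof. by move=> l1 l2; rewrite !inE => /eqP -> /eqP ->; rewrite eqxx. Qed.

Lemma pdisj0 : pdisj set0.
Proof. by move=> l1 l2; rewrite inE. Qed.

Lemma pdisj_same A l1 l2 x : pdisj A -> l1 \in A -> l2 \in A -> x \in l1 -> x \in l2 -> l1 = l2.
Proof.
move=> hA h1 h2 x1 x2; apply/eqP; apply/negPn/negP => hne.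
by move/disjP: (hA _ _ h1 h2 hne); apply; eauto.
Qed.

Lemma sum_sub (A B : pred V) (F : V -> nat) : {subset A <= B} ->
  \sum_(i in A) F i <= \sum_(i in B) F i.
Proof.
move=> h; rewrite [X in X <= _]big_mkcond [X in _ <= X]big_mkcond /=.
apply: leq_sum => i _; case: ifP => // /h ->; exact: leqnn.
Qed.

End Gen.


Section Paths.
Variable V : finType.
Implicit Types (ps : seq (V * V)) (s : V).

Lemma set2C (a b : V) : [set a; b] = [set b; a].
Proof. by apply/setP => x; rewrite !inE orbC. Qed.

Definition pv ps : seq V := flatten [seq [:: p.1; p.2] | p <- ps].
Definition lastv s ps := last s [seq p.2 | p <- ps].

Arguments pv : simpl never.
Arguments lastv : simpl never.

Fixpoint Fe s ps : {set {set V}} :=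
  match ps with (u, y) :: ps' => [set s; u] |: Fe y ps' | [::] => set0 end.
Fixpoint Me ps : {set {set V}} :=
  match ps with (u, y) :: ps' => [set u; y] |: Me ps' | [::] => set0 end.

Lemma pv_cons u y ps : pv ((u, y) :: ps) = u :: y :: pv ps. Proof. by []. Qed.
Lemma pv_cat a b : pv (a ++ b) = pv a ++ pv b.
Proof. by rewrite /pv map_cat flatten_cat. Qed.
Lemma lastv_cons s u y ps : lastv s ((u, y) :: ps) = lastv y ps. Proof. by []. Qed.
Lemma lastv_cat s a b : lastv s (a ++ b) = lastv (lastv s a) b.
Proof. by rewrite /lastv map_cat last_cat. Qed.
Lemma lastv_in s ps : lastv s ps \in s :: pv ps.
Proof.
elim: ps s => [|[u y] ps IH] s; first by rewrite inE.
by rewrite lastv_cons pv_cons !inE; move: (IH y); rewrite inE => /orP[->|->]; rewrite ?orbT.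
Qed.
Lemma Me_cat a b : Me (a ++ b) = Me a :|: Me b.
Proof. by elim: a => [|[u y] a IH] /=; rewrite ?set0U // IH setUA. Qed.
Lemma Fe_cat s a b : Fe s (a ++ b) = Fe s a :|: Fe (lastv s a) b.
Proof. by elim: a s => [|[u y] a IH] s /=; rewrite ?set0U // IH setUA. Qed.

Lemma cov_Me ps : cov (Me ps) = [set x | x \in pv ps].
Proof.
elim: ps => [|[u y] ps IH] /=; first by rewrite cov0; apply/setP => x; rewrite !inE.
rewrite covU cov1 IH; apply/setP => x; rewrite !inE. by rewrite -orbA.
Qed.

Lemma cov_Fe s ps : uniq (s :: pv ps) -> cov (Fe s ps) = [set x | x \in s :: pv ps] :\ lastv s ps.
Proof.
elim: ps s => [|[u y] ps IH] s /=.
  by move=> _; rewrite cov0; apply/setP => x; rewrite !inE; case: eqP.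
rewrite pv_cons => /andP[hs /andP[hu hun]].
rewrite covU cov1 IH // lastv_cons.
have hL := lastv_in y ps.
have h1 : (lastv y ps == s) = false.
  by apply/negP => /eqP hh; move: hs; rewrite hh !inE in hL *; rewrite hL orbT.
have h2 : (lastv y ps == u) = false.
  by apply/negP => /eqP hh; move: hu; rewrite hh in hL *; rewrite hL.
apply/setP => x; rewrite !inE.
case: (eqVneq x (lastv y ps)) => [->|hx] /=; first by rewrite h1 h2.
by rewrite !orbA.
Qed.

Lemma pdisj_Fe s ps : uniq (s :: pv ps) -> pdisj (Fe s ps).
Proof.
elim: ps s => [|[u y] ps IH] s /=; first by move=> _; exact: pdisj0.
rewrite pv_cons => hun; have := hun => /andP[hs /andP[hu hun']].
apply: pdisjU; [exact: pdisj1 | exact: IH|].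
rewrite cov1 cov_Fe //; apply/disjP => x; rewrite !inE => /orP[] /eqP -> /andP[_ h].
  by move: hs; rewrite !inE; case/orP: h => ->; rewrite ?orbT.
by move: hu h; rewrite /pv inE => /negP.
Qed.

Lemma vpv_uniq_cat s a b : uniq (s :: pv (a ++ b)) -> uniq (s :: pv a).
Proof. by rewrite pv_cat -cat_cons cat_uniq => /andP[]. Qed.

Lemma pv_split x ps : x \in pv ps ->
  exists p1 a b p2, ps = p1 ++ (a, b) :: p2 /\ (x = a \/ x = b).
Proof.
elim: ps => [|[u y] ps IH] //; rewrite pv_cons !inE => /orP[/eqP->|/orP[/eqP->|]].
- by exists [::], u, y, ps; split=> //; left.
- by exists [::], u, y, ps; split=> //; right.
move=> /IH [p1 [a [b [p2 [-> h]]]]]; by exists ((u, y) :: p1), a, b, p2.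
Qed.

Definition swp (p : V * V) := (p.2, p.1).
Definition rsw ps := rev (map swp ps).

Lemma pv_rsw ps : pv (rsw ps) = rev (pv ps).
Proof.
elim: ps => [|[u y] ps IH] //.
rewrite /rsw map_cons rev_cons -cats1 pv_cat -/(rsw ps) IH pv_cons.
by rewrite /pv /= !rev_cons -!cats1 -catA.
Qed.

Lemma lastv_rsw s u y ps : lastv s (rsw ((u, y) :: ps)) = u.
Proof. by rewrite /rsw map_cons rev_cons -cats1 lastv_cat. Qed.

End Paths.


Section Slot.
Variables (V : finType) (E : {set {set V}}) (Q0 : {set V} -> nat).
Hypothesis E2 : forall l, l \in E -> #|l| = 2.
Variable S : nat -> {set {set V}}.
Variable k : nat.
Local Notation M := (S k).
Local Notation w := (weight E Q0 S k).
Local Notation q := (qlen Q0 S k).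
Local Notation D := (Delta E Q0 S k).
Implicit Types A B : {set {set V}}.

Definition good (A : {set {set V}}) :=
  [/\ A \subset E, pdisj A & forall l, l \in A -> 0 < q l].

Lemma adm_good A : admissible E Q0 S k A -> good A.
Proof.
case=> [[hs hd] hq]; split=> // l1 l2 h1 h2 hne; exact: hd.
Qed.

Lemma good_adm A : good A -> admissible E Q0 S k A.
Proof. by case=> hs hd hq; split=> //; split=> // l1 l2; exact: hd. Qed.

Lemma mw_cov A : mweight E Q0 S k A = \sum_(i in cov A) w i.
Proof. by rewrite /mweight; apply: eq_bigl => i; rewrite inE. Qed.

Definition nl (x y : V) := ([set x; y] \in E) && (0 < q [set x; y]).
Lemma nlC x y : nl x y = nl y x.
Proof. by rewrite /nl set2C. Qed.
Lemma nl_neq x y : nl x y -> x != y.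
Proof.
by case/andP => /E2; rewrite cards2; case: eqP.
Qed.

Lemma good1 x y : nl x y -> good [set [set x; y]].
Proof.
case/andP=> h1 h2; split; [by rewrite sub1set | exact: pdisj1 |].
by move=> l; rewrite inE => /eqP ->.
Qed.

Lemma goodU A B : good A -> good B -> [disjoint cov A & cov B] -> good (A :|: B).
Proof.
case=> a1 a2 a3 [b1 b2 b3] hd; split; first by rewrite subUset a1 b1.
  exact: pdisjU.
by move=> l; rewrite inE => /orP[]; [exact: a3 | exact: b3].
Qed.

Lemma good_sub A B : A \subset B -> good B -> good A.
Proof.
move=> h [b1 b2 b3]; split; [exact: subset_trans b1 | exact: pdisj_sub b2|].
by move=> l hl; apply: b3; exact: (subsetP h).
Qed.

Lemma link2 l x : l \in E -> x \in l -> exists y, x != y /\ l = [set x; y].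
Proof.
move=> /E2 /eqP /cards2P [a [b [hab ->]]]; case/set2P => ->.
  by exists b.
by exists a; rewrite eq_sym set2C.
Qed.

Lemma good_nl A l x y : good A -> l \in A -> l = [set x; y] -> nl x y.
Proof. by case=> a1 _ a3 hl e; rewrite /nl -e (subsetP a1 _ hl) a3. Qed.

Lemma qnode_le x : qnode E Q0 S k x <= D.
Proof. rewrite /Delta; exact: (@leq_bigmax V (fun i => qnode E Q0 S k i) x). Qed.

Lemma w_le2q x : w x <= 2 * qnode E Q0 S k x.
Proof.
rewrite /weight; case: ifP => _.
  by rewrite mulnC leq_mul2r leq_subr orbT.
by rewrite leq_pmull.
Qed.

Lemma w_le x : w x <= 2 * D.
Proof. apply: leq_trans (w_le2q x) _; by rewrite leq_mul2l qnode_le orbT. Qed.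

Fixpoint vp (s : V) (ps : seq (V * V)) : bool :=
  match ps with (u, y) :: ps' => [&& nl s u, [set u; y] \in M & vp y ps'] | [::] => true end.

Lemma vp_cat s a b : vp s (a ++ b) = vp s a && vp (lastv s a) b.
Proof.
elim: a s => [|[u y] a IH] s //=; by rewrite IH lastv_cons !andbA.
Qed.

Lemma Me_subM s ps : vp s ps -> Me ps \subset M.
Proof.
elim: ps s => [|[u y] ps IH] s /=; first by rewrite sub0set.
by case/and3P=> _ h1 h2; rewrite subUset sub1set h1 (IH y).
Qed.

Lemma Fe_nl s ps l : vp s ps -> l \in Fe s ps -> exists x y, l = [set x; y] /\ nl x y.
Proof.
elim: ps s => [|[u y] ps IH] s /=; first by rewrite inE.
case/and3P=> h1 _ h2; rewrite !inE => /orP[/eqP ->|]; first by exists s, u.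
exact: IH.
Qed.

Lemma good_Fe s ps : vp s ps -> uniq (s :: pv ps) -> good (Fe s ps).
Proof.
move=> hv hu; split; last first.
- by move=> l hl; have [x [y [-> /andP[]]]] := Fe_nl hv hl.
- exact: pdisj_Fe.
apply/subsetP => l hl; have [x [y [-> /andP[]]]] := Fe_nl hv hl; done.
Qed.

End Slot.


Section KL.
Variables (V : finType) (E : {set {set V}}) (Q0 : {set V} -> nat).
Hypothesis E2 : forall l, l \in E -> #|l| = 2.
Variable S : nat -> {set {set V}}.
Variable k : nat.
Local Notation M := (S k).
Local Notation w := (weight E Q0 S k).
Local Notation q := (qlen Q0 S k).
Local Notation D := (Delta E Q0 S k).
Local Notation good := (good E Q0 S k).
Local Notation nl := (nl E Q0 S k).
Local Notation vp := (vp E Q0 S k).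
Implicit Types A B N : {set {set V}}.

Hypothesis HM : good M.
Hypothesis Hmax : forall A, good A -> \sum_(i in cov A) w i <= \sum_(i in cov M) w i.
Variable v : V.
Hypothesis Hv : w v = 2 * D.
Hypothesis HD : 0 < D.
Hypothesis Hnc : v \notin cov M.

Lemma sumMv : \sum_(i in cov M :|: [set v]) w i = \sum_(i in cov M) w i + w v.
Proof. by rewrite setUC big_setU1 //= addnC. Qed.

Lemma Expo N z : good N -> (cov M :|: [set v]) :\ z \subset cov N -> w v <= w z.
Proof.
move=> hN hsub.
have h2 : \sum_(i in cov M :|: [set v]) w i <= \sum_(i in (cov M :|: [set v]) :\ z) w i + w z.
  case hz: (z \in cov M :|: [set v]); first by rewrite (big_setD1 _ hz) /= addnC.
  rewrite (setDidPl _) ?leq_addr //; apply/disjP => x hx; rewrite inE => /eqP hxz.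
  by move: hz; rewrite -hxz hx.
have h3 : \sum_(i in (cov M :|: [set v]) :\ z) w i <= \sum_(i in cov M) w i.
  apply: leq_trans (Hmax hN); apply: sum_sub => x; exact: (subsetP hsub).
move: h2; rewrite sumMv => h2.
have := leq_trans h2 (leq_add h3 (leqnn (w z))).
by rewrite leq_add2l.
Qed.

Lemma Expo2 N : good N -> cov M :|: [set v] \subset cov N -> False.
Proof.
move=> hN hsub.
have h3 : \sum_(i in cov M :|: [set v]) w i <= \sum_(i in cov M) w i.
  apply: leq_trans (Hmax hN); apply: sum_sub => x; exact: (subsetP hsub).
move: h3; rewrite sumMv -{2}(addn0 (\sum_(i in cov M) w i)) leq_add2l Hv.
by rewrite leqn0 muln_eq0 /= => /eqP hd; move: HD; rewrite hd.
Qed.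

Definition ok ps := vp v ps && uniq (v :: pv ps).
Definition vset ps := [set x | x \in v :: pv ps].

Lemma ok_vp ps : ok ps -> vp v ps. Proof. by case/andP. Qed.
Lemma ok_uniq ps : ok ps -> uniq (v :: pv ps). Proof. by case/andP. Qed.

Lemma HMsub : M \subset E. Proof. by case: HM. Qed.
Lemma HMdisj : pdisj M. Proof. by case: HM. Qed.

Lemma vset_cov ps x : ok ps -> x \in pv ps -> x \in cov M.
Proof.
move=> hok hx; apply: (subsetP (cov_subset (Me_subM (ok_vp hok)))).
by rewrite cov_Me inE.
Qed.

Lemma closure ps l x : ok ps -> l \in M -> x \in l -> x \in v :: pv ps -> l \in Me ps.
Proof.
move=> hok hl hx; rewrite inE => /orP[/eqP hxv|hx2].
  by move: Hnc; rewrite -hxv (cov_sub hl hx).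
have : x \in cov (Me ps) by rewrite cov_Me inE.
case/covP => l' hl' hx'.
have hl'M := subsetP (Me_subM (ok_vp hok)) _ hl'.
by rewrite (pdisj_same HMdisj hl hl'M hx hx').
Qed.

Lemma cov_MD ps : ok ps -> cov (M :\: Me ps) = cov M :\: vset ps.
Proof.
move=> hok; apply/setP => x; rewrite [in RHS]inE; apply/covP/andP.
  case=> l; rewrite inE => /andP[hl1 hl2] hx; split; last exact: cov_sub hl2 hx.
  by rewrite inE; apply/negP => hv; move: hl1; rewrite (closure hok hl2 hx hv).
case=> hxv /covP[l hl hx]; exists l => //; rewrite inE hl andbT; apply/negP => hlm.
have : x \in cov (Me ps) by exact: cov_sub hlm hx.
rewrite cov_Me inE => hx2; by move: hxv; rewrite !inE hx2 orbT.
Qed.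

Definition Flip ps := (M :\: Me ps) :|: Fe v ps.

Lemma flip_good ps : ok ps -> good (Flip ps).
Proof.
move=> hok; apply: goodU.
- exact: good_sub (subsetDl _ _) HM.
- exact: good_Fe (ok_vp hok) (ok_uniq hok).
rewrite cov_MD // cov_Fe ?(ok_uniq hok) //; apply/disjP => x /setDP[_ h1] /setD1P[_ h2].
by rewrite h2 in h1.
Qed.

Lemma flip_cov ps : ok ps -> cov (Flip ps) = (cov M :|: [set v]) :\ lastv v ps.
Proof.
move=> hok; rewrite covU cov_MD // cov_Fe ?(ok_uniq hok) //.
have hL := lastv_in v ps; rewrite inE in hL.
apply/setP => x; rewrite !inE.
case hxs: ((x == v) || (x \in pv ps)) => /=.
  have hc : covered M x || (x == v).
    case/orP: hxs => [->|/(vset_cov hok)]; [by rewrite orbT | by rewrite inE => ->].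
  by rewrite hc andbT.
have hxL : (x == lastv v ps) = false by apply/negP => /eqP hh; move: hxs; rewrite hh hL.
have hxv : (x == v) = false by apply/negP => /eqP hh; move: hxs; rewrite hh eqxx.
by rewrite hxL hxv orbF.
Qed.

Definition Reach z := exists2 ps, ok ps & lastv v ps = z.

Lemma reach_w z : Reach z -> w z = 2 * D.
Proof.
case=> ps hok <-; apply/eqP; rewrite eqn_leq w_le -Hv.
by apply: (Expo (flip_good hok)); rewrite flip_cov.
Qed.

Lemma ok_prefix a b : ok (a ++ b) -> ok a.
Proof.
case/andP; rewrite vp_cat => /andP[h1 _] h2; rewrite /ok h1; exact: vpv_uniq_cat h2.
Qed.

Lemma uniq_drop_mid (T : eqType) (x : T) P Q R : uniq (x :: P ++ Q ++ R) -> uniq (x :: P ++ rev R).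
Proof.
move=> h; have : uniq ((x :: P) ++ R).
  by apply: subseq_uniq h; rewrite -cat_cons cat_subseq // suffix_subseq.
by rewrite -cat_cons !cat_uniq rev_uniq has_rev.
Qed.

Lemma rsw_cons (p : V * V) ps : rsw (p :: ps) = rsw ps ++ [:: swp p].
Proof. by rewrite /rsw map_cons rev_cons cats1. Qed.

Lemma vp_rsw s2 a b x : vp b s2 -> [set a; b] \in M -> nl x (lastv b s2) ->
  vp x (rsw ((a, b) :: s2)).
Proof.
elim: s2 a b x => [|[a' b'] s2 IH] a b x.
  by move=> _ hab hx; rewrite /rsw /= hx set2C hab.
move=> /= /and3P[h1 h2 h3] hab hx.
rewrite rsw_cons vp_cat (IH a' b' x h3 h2 hx) /= lastv_rsw /= set2C hab nlC h1.
by [].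
Qed.

Lemma nlM u y : [set u; y] \in M -> nl u y.
Proof. by move=> h; apply: (good_nl HM h). Qed.

Variable col : V -> bool.
Hypothesis Hcol : forall x y, w x = 2 * D -> w y = 2 * D -> nl x y -> col x != col y.

Lemma col_path s ps : vp s ps -> (forall x, x \in s :: pv ps -> w x = 2 * D) ->
  col (lastv s ps) = col s.
Proof.
elim: ps s => [|[u y] ps IH] s //= /and3P[h1 h2 h3] hw.
rewrite lastv_cons IH //; last first.
  by move=> x hx; apply: hw; rewrite pv_cons !inE; move: hx; rewrite inE => /orP[->|->]; rewrite ?orbT.
have ws : w s = 2 * D by apply: hw; rewrite inE eqxx.
have wu : w u = 2 * D by apply: hw; rewrite pv_cons !inE eqxx orbT.
have wy : w y = 2 * D by apply: hw; rewrite pv_cons !inE eqxx !orbT.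
have c1 := Hcol ws wu h1.
have c2 := Hcol wu wy (nlM h2).
by move: c1 c2; case: (col s); case: (col u); case: (col y).
Qed.

Lemma blossom pre seg : ok (pre ++ seg) -> seg != [::] ->
  nl (lastv v (pre ++ seg)) (lastv v pre) -> False.
Proof.
move=> hok hseg hch.
have hokp : ok pre := ok_prefix hok.
have [hvp hun] := andP hok.
move: (hvp); rewrite vp_cat => /andP[hvpre hvseg].
set yj := lastv v pre in hch hvseg.
have hr : forall x, x \in pv seg -> Reach x.
  move=> x /pv_split [s1 [a [b [s2 [eseg hx]]]]].
  move: hvseg; rewrite eseg vp_cat => /andP[_ hv2].
  move: hv2 => /= /and3P[_ hab hbs2].
  case: hx => ->.
  - exists (pre ++ rsw ((a, b) :: s2)); last by rewrite lastv_cat lastv_rsw.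
    rewrite /ok vp_cat hvpre /=; apply/andP; split.
      apply: vp_rsw => //; move: hch; rewrite lastv_cat eseg lastv_cat /= lastv_cons nlC //.
    move: hun; rewrite !pv_cat pv_rsw eseg pv_cat pv_cons.
    by move=> h; apply: uniq_drop_mid h.
  - exists (pre ++ s1 ++ [:: (a, b)]); last by rewrite !lastv_cat.
    apply: (@ok_prefix _ s2); by rewrite -!catA /= -eseg.
have hrz : Reach (lastv v (pre ++ seg)) by exists (pre ++ seg).
have hry : Reach yj by exists pre.
have hc := col_path hvseg.
have : col (lastv yj seg) = col yj.
  apply: hc => x; rewrite inE => /orP[/eqP ->|hx]; first exact: reach_w.
  exact: reach_w (hr x hx).
have := Hcol (reach_w hrz) (reach_w hry) hch.
rewrite lastv_cat -/yj => hne heq; by rewrite heq eqxx in hne.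
Qed.

Lemma lastv1 (s a b : V) : lastv s [:: (a, b)] = b. Proof. by []. Qed.

Lemma neighbor z u : Reach z -> nl z u -> exists2 t, Reach t & [set u; t] \in M.
Proof.
case=> ps hok hz hzu; have [hvp hun] := andP hok.
have hzu' := nl_neq E2 hzu.
case hu: (u \in v :: pv ps).
  move: hu; rewrite inE => /orP[/eqP huv | hu'].
    exfalso; apply: (@blossom [::] ps) => //=.
      by apply/eqP => eps; move: hzu'; rewrite -hz eps huv eqxx.
    by rewrite hz -huv.
  have [p1 [a [b [p2 [eps hx]]]]] := pv_split hu'.
  move: hvp; rewrite eps vp_cat => /andP[_ /= /and3P[_ hab _]].
  case: hx => hx.
    exists b; last by rewrite hx.
    exists (p1 ++ [:: (a, b)]); last by rewrite lastv_cat.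
    by apply: (@ok_prefix _ p2); rewrite -catA /= -eps.
  exfalso; apply: (@blossom (p1 ++ [:: (a, b)]) p2).
  - by rewrite -catA /= -eps.
  - apply/eqP => ep2; move: hzu'; rewrite -hz eps ep2 lastv_cat lastv1 hx eqxx //.
  - by rewrite -catA /= -eps hz lastv_cat lastv1 -hx.
case hc: (u \in cov M).
  case/covP: hc => l hl hul; have hlE := subsetP HMsub _ hl.
  have [t [hut el]] := link2 E2 hlE hul.
  have htl : t \in l by rewrite el !inE eqxx orbT.
  have ht : t \notin v :: pv ps.
    apply/negP => ht; have hlm := closure hok hl htl ht.
    have : u \in cov (Me ps) by exact: cov_sub hlm hul.
    by rewrite cov_Me inE => hh; move: hu; rewrite inE hh orbT.
  exists t; last by rewrite -el.
  exists (ps ++ [:: (u, t)]); last by rewrite lastv_cat.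
  rewrite /ok vp_cat hvp /= hz hzu -el hl /= pv_cat.
  rewrite (_ : pv [:: (u, t)] = [:: u; t]) // mem_cat cat_uniq /= !inE.
  move: hun hu ht hut; rewrite /= !inE => /andP[/negbTE -> ->] /norP[/negbTE hu1 /negbTE hu2].
  move=> /norP[/negbTE ht1 /negbTE ht2] ->.
  by rewrite eq_sym hu1 eq_sym ht1 hu2 ht2.
exfalso; apply: (@Expo2 (Flip ps :|: [set [set z; u]])).
  apply: goodU; [exact: flip_good | exact: good1 |].
  rewrite flip_cov // cov1 hz; apply/disjP => x /setD1P[hxz hx] /set2P[hh|hh].
    by rewrite hh eqxx in hxz.
  rewrite hh in hx; move: hx; rewrite in_setU hc /= inE => /eqP huv; move: hu; rewrite huv inE eqxx //.
apply/subsetP => x hx; rewrite covU flip_cov // cov1 hz !inE.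
case: (eqVneq x z) => [->|hxz] //=.
by move: hx; rewrite !inE => ->.
Qed.

Lemma sum_in2 (A : {set V}) a b : a != b ->
  \sum_(z in A) (z \in [set a; b] : nat) = (a \in A) + (b \in A).
Proof.
move=> hab.
have -> : \sum_(z in A) (z \in [set a; b] : nat) = \sum_(z in [set a; b]) (z \in A : nat).
  rewrite big_mkcond [RHS]big_mkcond /=; apply: eq_bigr => z _.
  by case: (z \in A); case: (z \in [set a; b]).
by rewrite big_setU1 ?big_set1 //= inE.
Qed.

Theorem KL_false : False.
Proof.
pose O := [set z | asb (Reach z)].
have inO z : reflect (Reach z) (z \in O) by rewrite inE; exact: asbP.
have vO : v \in O.
  apply/inO; exists [::] => //; by rewrite /ok /= andbT.
pose Ns := [set u | [exists t, (t \in O) && ([set u; t] \in M)]].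
have qO : forall z, z \in O -> qnode E Q0 S k z = D.
  move=> z /inO /reach_w hw; apply/eqP; rewrite eqn_leq qnode_le /=.
  by rewrite -(leq_pmul2l (isT : 0 < 2)) -hw w_le2q.
have nb : forall z u, z \in O -> [set z; u] \in E -> 0 < q [set z; u] -> u \in Ns.
  move=> z u /inO hz hE hq; have [t ht htm] := neighbor hz (introT andP (conj hE hq)).
  by rewrite inE; apply/existsP; exists t; rewrite htm andbT; apply/inO.
have step1 : \sum_(z in O) qnode E Q0 S k z <= \sum_(u in Ns) qnode E Q0 S k u.
  have e1 : forall z, qnode E Q0 S k z = \sum_(l in E) (z \in l) * q l.
    move=> z; rewrite /qnode big_mkcondr /=; apply: eq_bigr => l _.
    by case: (z \in l); rewrite ?mul1n ?mul0n.
  rewrite (eq_bigr _ (fun z _ => e1 z)) [X in _ <= X](eq_bigr _ (fun z _ => e1 z)).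
  rewrite exchange_big [X in _ <= X]exchange_big /=; apply: leq_sum => l hl.
  rewrite -!big_distrl /= leq_mul2r; case: (posnP (q l)) => // hq /=.
  have [a [b [hab el]]] : exists a b, a != b /\ l = [set a; b] by apply/cards2P; rewrite E2.
  rewrite el !sum_in2 //.
  have i1 : a \in O -> b \in Ns by move=> h; apply: (nb a b h); rewrite -el.
  have i2 : b \in O -> a \in Ns.
    by move=> h; apply: (nb b a h); rewrite set2C -el.
  move: i1 i2; case: (a \in O); case: (b \in O); case: (a \in Ns); case: (b \in Ns) => //= h1 h2; first [by have := h1 isT | by have := h2 isT].
pose p u := odflt u [pick t | (t \in O) && ([set u; t] \in M)].
have hp : forall u, u \in Ns -> (p u \in O) && ([set u; p u] \in M).
  move=> u; rewrite inE => /existsP[t ht]; rewrite /p.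
  by case: pickP => [t' -> //|/(_ t)]; rewrite ht.
have step2 : #|Ns| < #|O|.
  rewrite (cardsD1 v O) vO add1n ltnS -(@card_in_imset _ _ p Ns).
    apply: subset_leq_card; apply/subsetP => t /imsetP[u hu ->].
    have /andP[h1 h2] := hp u hu; rewrite !inE; rewrite inE in h1; rewrite h1 andbT.
    by apply/eqP => hv; move: Hnc; rewrite -hv in h2 *; rewrite (cov_sub h2) // !inE eqxx orbT.
  move=> u1 u2 h1 h2 he.
  have /andP[_ m1] := hp u1 h1; have /andP[_ m2] := hp u2 h2.
  rewrite he in m1.
  have e := pdisj_same HMdisj m1 m2 (set22 _ _) (set22 _ _).
  have : u1 \in [set u2; p u2] by rewrite -e set21.
  case/set2P => // hu1.
  by have := nl_neq E2 (nlM m1); rewrite hu1 eqxx.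
have s1 : \sum_(z in O) qnode E Q0 S k z = #|O| * D.
  by rewrite (eq_bigr _ (fun z hz => qO z hz)) sum_nat_const.
have s2 : \sum_(u in Ns) qnode E Q0 S k u <= #|Ns| * D.
  by rewrite -sum_nat_const; apply: leq_sum => u _; exact: qnode_le.
have := leq_trans step1 s2; rewrite s1 leq_mul2r.
case/orP => [/eqP hd|]; first by move: HD; rewrite hd.
by rewrite leqNgt step2.
Qed.

End KL.


Section Queue.
Variables (V : finType) (E : {set {set V}}) (Q0 : {set V} -> nat).
Hypothesis E2 : forall l, l \in E -> #|l| = 2.
Variable S : nat -> {set {set V}}.
Local Notation Qn := (qnode E Q0 S).
Local Notation Dl := (Delta E Q0 S).

Lemma qlen_mono k l : qlen Q0 S k.+1 l <= qlen Q0 S k l.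
Proof. by rewrite /= leq_subr. Qed.

Lemma qnode_mono k i : Qn k.+1 i <= Qn k i.
Proof. by apply: leq_sum => l _; exact: qlen_mono. Qed.

Lemma qnode_ge k i l : l \in E -> i \in l -> qlen Q0 S k l <= Qn k i.
Proof.
move=> hl hi; rewrite /qnode (bigD1 l) /=; last by rewrite hl hi.
exact: leq_addr.
Qed.

Lemma qnode_ge2 k i l l' : l \in E -> i \in l -> l' \in E -> i \in l' -> l != l' ->
  qlen Q0 S k l + qlen Q0 S k l' <= Qn k i.
Proof.
move=> hl hi hl' hi' hne; rewrite /qnode (bigD1 l) /=; last by rewrite hl hi.
rewrite leq_add2l (bigD1 l') /=; last by rewrite hl' hi' eq_sym hne.
exact: leq_addr.
Qed.

Lemma qnode_le_D k i : Qn k i <= Dl k.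
Proof. rewrite /Delta; exact: (@leq_bigmax V (fun i => Qn k i) i). Qed.

Lemma Delta_le k m : (forall i, Qn k i <= m) -> Dl k <= m.
Proof. by move=> h; apply/bigmax_leqP => i _; exact: h. Qed.

Lemma Delta_mono k : Dl k.+1 <= Dl k.
Proof. apply: Delta_le => i; exact: leq_trans (qnode_mono k i) (qnode_le_D k i). Qed.

Lemma Delta_mono_le k j : k <= j -> Dl j <= Dl k.
Proof.
elim: j => [|j IH]; first by rewrite leqn0 => /eqP ->.
rewrite leq_eqVlt => /orP[/eqP ->//| hk].
exact: leq_trans (Delta_mono j) (IH hk).
Qed.

Lemma qnode_unserved k i : ~~ covered (S k) i -> Qn k.+1 i = Qn k i.
Proof.
move=> hc; apply: eq_bigr => l /andP[_ hi] /=.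
case hl: (l \in S k); last by rewrite subn0.
by case/negP: hc; apply/existsP; exists l; rewrite hl hi.
Qed.

Lemma qnode_served k i : admissible E Q0 S k (S k) -> covered (S k) i -> Qn k.+1 i < Qn k i.
Proof.
move=> [[hsub _] hq] /existsP[l /andP[hl hi]].
have hlE := subsetP hsub _ hl.
rewrite /qnode (bigD1 l) /=; last by rewrite hlE hi.
rewrite [X in _ < X](bigD1 l) /=; last by rewrite hlE hi.
have hq0 := hq _ hl.
rewrite -addSn; apply: leq_add; last first.
  by apply: leq_sum => l' _; exact: qlen_mono.
by rewrite /= hl subn1 prednK.
Qed.

Lemma qnode_feas k i : admissible E Q0 S k (S k) -> Qn k i <= Qn k.+1 i + 1.
Proof.
move=> [[hsub hd] hq].
have h1 : Qn k i <= Qn k.+1 i + \sum_(l in E | i \in l) (l \in S k : nat).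
  rewrite /qnode -big_split /=; apply: leq_sum => l _ /=.
  by rewrite addnC -leq_subLR.
apply: (leq_trans h1); rewrite leq_add2l.
case: (boolP [exists l in S k, i \in l]) => [/existsP[l0 /andP[h0 hi0]]|hn].
  rewrite (bigD1 l0) /=; last by rewrite (subsetP hsub _ h0) hi0.
  rewrite h0 big1 // => l /andP[/andP[_ hi] hne].
  case hl: (l \in S k) => //; have := hd _ _ hl h0 hne.
  by move/disjP => /(_ i hi hi0).
rewrite big1 // => l /andP[_ hi]; case hl: (l \in S k) => //.
by case/negP: hn; apply/existsP; exists l; rewrite hl hi.
Qed.

End Queue.


Section NSB.
Variables (V : finType) (E : {set {set V}}) (Q0 : {set V} -> nat).
Hypothesis E2 : forall l, l \in E -> #|l| = 2.
Variable S : nat -> {set {set V}}.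
Hypothesis HN : NSB_run E Q0 S.
Local Notation Qn := (qnode E Q0 S).
Local Notation Dl := (Delta E Q0 S).
Local Notation w := (weight E Q0 S).

Lemma HMk k : good E Q0 S k (S k).
Proof. by apply: adm_good; case: (HN k). Qed.

Lemma Hmaxk k A : good E Q0 S k A -> \sum_(i in cov A) w k i <= \sum_(i in cov (S k)) w k i.
Proof. by move=> hA; rewrite -!mw_cov; case: (HN k) => _; apply; apply: good_adm. Qed.

Lemma Radm k : admissible E Q0 S k (S k).
Proof. by case: (HN k). Qed.

Lemma Rn_cov k x : Rn S k x = covered (S k) x.
Proof. by []. Qed.

Lemma Un_le1 k x : Un S k x <= 1.
Proof.
rewrite /Un /Rback; case: ifP => _; case: ifP => _; try case: ifP => _;
  rewrite /Rn; repeat case: [exists _ in _, _]; by [].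
Qed.

Lemma w_ge k x : Qn k x <= w k x.
Proof.
rewrite /weight; case: ifP => // _.
have := Un_le1 k x; rewrite leq_eqVlt ltnS leqn0 => /orP[] /eqP ->; by rewrite ?muln1 ?leq_pmulr.
Qed.

Lemma P1 k l : l \in E -> 0 < qlen Q0 S k l -> exists2 x, x \in l & covered (S k) x.
Proof.
move=> hl hq; have := E2 hl => /eqP /cards2P [a [b [hab el]]].
case ha: (covered (S k) a); first by exists a; rewrite // el set21.
case hb: (covered (S k) b); first by exists b; rewrite // el set22.
exfalso.
have hnl : nl E Q0 S k a b by rewrite /nl -el hl hq.
have hg : good E Q0 S k (S k :|: [set l]).
  apply: goodU => //; [exact: HMk | rewrite el; exact: good1 |].
  rewrite el cov1; apply/disjP => x; rewrite inE => hx /set2P[] e; subst x.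
    by rewrite ha in hx.
  by rewrite hb in hx.
have h1 := Hmaxk hg.
have hsub : cov (S k) :|: [set a] \subset cov (S k :|: [set l]).
  apply/subsetP => x; rewrite covU el cov1 !inE => /orP[->//|/eqP ->].
  by rewrite eqxx !orbT.
have h2 : \sum_(i in cov (S k) :|: [set a]) w k i <= \sum_(i in cov (S k)) w k i.
  apply: leq_trans h1; apply: sum_sub => x; exact: (subsetP hsub).
move: h2; rewrite setUC big_setU1 /=; last by rewrite inE ha.
rewrite -{2}(add0n (\sum_(i in cov (S k)) w k i)) leq_add2r leqn0 => /eqP h0.
have ha' : a \in l by rewrite el set21.
have h3 := qnode_ge Q0 S k hl ha'.
by have := leq_trans (leq_trans hq h3) (w_ge k a); rewrite h0.
Qed.

Lemma KLs k (col : V -> bool) :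
  (forall x y, w k x = 2 * Dl k -> w k y = 2 * Dl k -> nl E Q0 S k x y -> col x != col y) ->
  0 < Dl k -> forall v, w k v = 2 * Dl k -> covered (S k) v.
Proof.
move=> hcol hD v hv; case hc: (covered (S k) v) => //; exfalso.
apply: (@KL_false V E Q0 E2 S k (HMk k) (@Hmaxk k) v hv hD _ col hcol).
by rewrite inE hc.
Qed.

Lemma w2D k x : 0 < Dl k -> w k x = 2 * Dl k -> Un S k x = 0 /\ Qn k x = Dl k.
Proof.
move=> hD; rewrite /weight; have hq := qnode_le_D E Q0 S k x.
case: ifP => _; last first.
  move=> h; move: hq; rewrite h => hh.
  by have := leq_ltn_trans hh (ltn_Pmull (isT : 1 < 2) hD); rewrite ltnn.
have := Un_le1 k x; rewrite leq_eqVlt ltnS leqn0 => /orP[] /eqP ->.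
  rewrite muln1 => h; move: hq; rewrite h => hh.
  by have := leq_ltn_trans hh (ltn_Pmull (isT : 1 < 2) hD); rewrite ltnn.
by rewrite subn0 mulnC => /eqP; rewrite eqn_pmul2l // => /eqP.
Qed.

End NSB.


Section Frame.
Variables (V : finType) (E : {set {set V}}) (Q0 : {set V} -> nat).
Hypothesis E2 : forall l, l \in E -> #|l| = 2.
Variable S : nat -> {set {set V}}.
Hypothesis HN : NSB_run E Q0 S.
Local Notation Qn := (qnode E Q0 S).
Local Notation Dl := (Delta E Q0 S).
Local Notation w := (weight E Q0 S).

Lemma Un1 m y : Un S (3 * m).+1 y = Rn S (3 * m) y.
Proof.
rewrite /Un (_ : (3 * m).+1 %% 3 = 1); last by rewrite -addn1 mulnC modnMDl.
by rewrite /Rback /= subn1.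
Qed.

Lemma Un2 m y : Un S (3 * m).+2 y = Rn S (3 * m).+1 y * Rn S (3 * m) y.
Proof.
rewrite /Un (_ : (3 * m).+2 %% 3 = 2); last by rewrite -addn2 mulnC modnMDl.
by rewrite /Rback /= subn1 subn2.
Qed.

Lemma heavy_max k x : Qn k x = Dl k -> heavy E Q0 S k x.
Proof. by move=> h; rewrite /heavy h leq_mul2r leq_subr orbT. Qed.

Lemma w_max k x : Qn k x = Dl k -> Un S k x = 0 -> w k x = 2 * Dl k.
Proof. by move=> h hu; rewrite /weight heavy_max // hu h mulnC. Qed.

Lemma small k : Dl k <= 1 -> forall l, l \in E -> qlen Q0 S k.+1 l = 0.
Proof.
move=> hD l hl; case: (posnP (qlen Q0 S k l)) => [h0|hq].
  by apply/eqP; rewrite -leqn0 -h0 qlen_mono.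
have [x hx /existsP[l' /andP[hl' hx']]] := P1 E2 HN hl hq.
have [[hsub _] hq'] := Radm HN k; have hl'E := subsetP hsub _ hl'.
have hqx := leq_trans (qnode_ge Q0 S k hl hx) (leq_trans (qnode_le_D E Q0 S k x) hD).
case: (eqVneq l l') => [e|hne].
  by rewrite /= e hl' -e; move: hqx hq; case: (qlen Q0 S k l) => [|[]].
have h2 := qnode_ge2 Q0 S k hl hx hl'E hx' hne.
have h3 := hq' _ hl'.
have := leq_trans (leq_add hq h3) (leq_trans h2 (leq_trans (qnode_le_D E Q0 S k x) hD)).
by [].
Qed.

Lemma Dzero k : (forall l, l \in E -> qlen Q0 S k l = 0) -> Dl k = 0.
Proof.
move=> h; apply/eqP; rewrite -leqn0; apply: Delta_le => i.
by rewrite /qnode big1 // => l /andP[hl _]; rewrite h.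
Qed.

Lemma served_lt k x : covered (S k) x -> Qn k.+1 x < Qn k x.
Proof. by move=> h; apply: qnode_served => //; exact: Radm. Qed.

Lemma frame m : Dl (3 * m).+3 <= Dl (3 * m) - 2.
Proof.
set a := 3 * m; set D := Dl a.
case: (leqP D 1) => hD.
  have h1 := Dzero (small hD).
  have hle : a.+1 <= a.+3 by rewrite !ltnS leqW.
  by have := Delta_mono_le E Q0 S hle; rewrite h1 leqn0 => /eqP ->.
have F1 : forall x, Qn a x = D -> covered (S a) x || covered (S a.+1) x.
  move=> x hx; case ha: (covered (S a) x) => //=.
  have hq1 : Qn a.+1 x = D by rewrite qnode_unserved ?ha.
  have hD1 : Dl a.+1 = D.
    apply/eqP; rewrite eqn_leq Delta_mono /= -{1}hq1; exact: qnode_le_D.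
  have hD1p : 0 < Dl a.+1 by rewrite hD1; apply: leq_trans hD.
  apply: (KLs E2 HN (col := fun _ => true)) => //; last first.
    by apply: w_max; [rewrite hq1 hD1 | rewrite /a Un1 Rn_cov ha].
  move=> y z hy hz /andP[hE hq]; exfalso.
  have [uy _] := w2D hD1p hy; have [uz _] := w2D hD1p hz.
  rewrite /a Un1 Rn_cov in uy; rewrite Un1 Rn_cov in uz.
  have hq0 : 0 < qlen Q0 S a [set y; z] := leq_trans hq (qlen_mono _ _ _ _).
  have [x' /set2P[] -> hc] := P1 E2 HN hE hq0.
    by rewrite hc in uy.
  by rewrite hc in uz.
have hc : forall x, Qn a.+2 x <= D - 1.
  move=> x; suff : Qn a.+2 x < D by move=> h; rewrite -ltnS subn1 prednK // ltnW.
  have h0 : Qn a.+2 x <= Qn a x.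
    exact: leq_trans (qnode_mono _ _ _ _ _) (qnode_mono _ _ _ _ _).
  case: (ltnP (Qn a x) D) => h; first exact: leq_ltn_trans h0 h.
  have hxD : Qn a x = D by apply/eqP; rewrite eqn_leq h qnode_le_D.
  case/orP: (F1 x hxD) => hs.
    by have := served_lt hs; rewrite hxD; apply: leq_ltn_trans (qnode_mono _ _ _ _ _).
  by apply: leq_trans (served_lt hs) _; rewrite -hxD qnode_mono.
apply: Delta_le => x.
case: (ltnP (Qn a.+2 x) (D - 1)) => h.
  apply: leq_trans (qnode_mono _ _ _ _ _) _; by rewrite -ltnS -subSn // subSS subn1.
have hx : Qn a.+2 x = D - 1 by apply/eqP; rewrite eqn_leq h hc.
have hD2 : Dl a.+2 = D - 1.
  by apply/eqP; rewrite eqn_leq (Delta_le hc) /= -{1}hx qnode_le_D.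
have hD2p : 0 < Dl a.+2 by rewrite hD2 subn_gt0.
have hU : Un S a.+2 x = 0.
  rewrite /a Un2 !Rn_cov.
  case h1: (covered (S (3 * m).+1) x); case h2: (covered (S (3 * m)) x) => //.
  have l1 := served_lt h1; have l2 := served_lt h2; rewrite -/a in l1 l2.
  have l3 := qnode_le_D E Q0 S a x; rewrite -/D in l3.
  move: l1 l2 l3 hx hD; clear; lia.
have hw := w_max (etrans hx (esym hD2)) hU.
have hcov : covered (S a.+2) x.
  apply: (KLs E2 HN (col := fun y => covered (S a) y) _ hD2p hw).
  move=> y z hy hz /andP[hE hq].
  have [uy _] := w2D hD2p hy; have [uz _] := w2D hD2p hz.
  rewrite /a Un2 !Rn_cov in uy; rewrite Un2 !Rn_cov in uz.
  have hq1 : 0 < qlen Q0 S a.+1 [set y; z] := leq_trans hq (qlen_mono _ _ _ _).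
  have hq0 : 0 < qlen Q0 S a [set y; z] := leq_trans hq1 (qlen_mono _ _ _ _).
  case cy: (covered (S a) y); case cz: (covered (S a) z) => //.
    rewrite /a in cy cz; rewrite cy muln1 in uy; rewrite cz muln1 in uz.
    have [x' /set2P[] -> hc'] := P1 E2 HN hE hq1.
      by rewrite hc' in uy.
    by rewrite hc' in uz.
  have [x' /set2P[] -> hc'] := P1 E2 HN hE hq0.
    by rewrite hc' in cy.
  by rewrite hc' in cz.
have := served_lt hcov; rewrite hx => hh.
by rewrite -ltnS -subSn // subSS subn1.
Qed.

End Frame.

Unset Implicit Arguments.

Theorem theorem1 (V : finType) (E : {set {set V}}) (Q0 : {set V} -> nat) :
  (forall l, l \in E -> #|l| = 2) ->
  (forall l, l \notin E -> Q0 l = 0) ->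
  forall S : nat -> {set {set V}}, NSB_run E Q0 S ->
  forall (S' : nat -> {set {set V}}) (t' : nat),
    feasible E Q0 S' -> evacuated E Q0 S' t' ->
    exists T : nat, evacuated E Q0 S T /\ 2 * T <= 3 * t'.
Proof.
move=> E2 _ S HN S' t' HF Hev.
set D0 := Delta E Q0 S 0.
have Dm : forall m, Delta E Q0 S (3 * m) <= D0 - 2 * m.
  elim => [|m IH]; first by rewrite muln0 subn0.
  have := frame E2 HN m; rewrite (_ : 3 * m.+1 = (3 * m).+3); last by lia.
  move: IH; lia.
have evac0 : forall k, Delta E Q0 S k = 0 -> evacuated E Q0 S k.
  move=> k hk l hl; have := E2 l hl => /eqP /cards2P [a [b [_ el]]].
  have ha : a \in l by rewrite el set21.
  have := leq_trans (qnode_ge Q0 S k hl ha) (qnode_le_D E Q0 S k a).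
  by rewrite hk leqn0 => /eqP.
have Dt : D0 <= t'.
  apply: Delta_le => i.
  have h : forall k, qnode E Q0 S' 0 i <= qnode E Q0 S' k i + k.
    elim => [|k IH]; first by rewrite addn0.
    apply: leq_trans IH _; rewrite addnS -addSn leq_add2r -addn1.
    exact: qnode_feas (HF k).
  have := h t'; rewrite (_ : qnode E Q0 S' t' i = 0) //.
  by rewrite /qnode big1 // => l /andP[hl _]; rewrite Hev.
have hD := odd_double_half D0; rewrite -muln2 in hD.
exists (3 * D0./2 + odd D0); split; last by move: hD Dt; lia.
case hodd: (odd D0).
  rewrite addn1; apply: small => //.
  by apply: leq_trans (Dm _) _; move: hD; rewrite hodd; lia.
rewrite addn0; apply: evac0; apply/eqP; rewrite -leqn0.
by apply: leq_trans (Dm _) _; move: hD; rewrite hodd; lia.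
Qed.
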